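(* Let $p$ be an odd prime, $a,m\in\mathbb Z_p$ with $a\not\equiv0,-1\pmod p$ and $m\not\equiv0\pmod p$, and put $A_k=\binom ak\binom{-1-a}k\binom{2k}k$. Then $$\frac{m-4}2\sum_{k=0}^{p-1}\frac{k^2A_k}{m^k}\equiv\sum_{k=0}^{p-1}\frac{kA_k}{m^k}-2a(a+1)\sum_{k=0}^{p-1}\frac{A_k}{m^k}+a(a+1)\sum_{k=0}^{p-2}\frac{A_k}{m^k(k+1)}\pmod{p^3},$$ $$\frac{m-4}2\sum_{k=0}^{p-1}\frac{k^3A_k}{m^k}\equiv3\sum_{k=0}^{p-1}\frac{k^2A_k}{m^k}-(2a(a+1)-1)\sum_{k=0}^{p-1}\frac{kA_k}{m^k}-a(a+1)\sum_{k=0}^{p-1}\frac{A_k}{m^k}\pmod{p^3}.$$ Consequently, if moreover $m\not\equiv 4\pmod p$, then $$\sum_{k=0}^{p-1}\frac{k^3A_k}{m^k}\equiv\frac{(2-4a(a+1))(m-4)+12}{(m-4)^2}\sum_{k=0}^{p-1}\frac{kA_k}{m^k}-\frac{2a(a+1)(m+8)}{(m-4)^2}\sum_{k=0}^{p-1}\frac{A_k}{m^k}+\frac{12a(a+1)}{(m-4)^2}\sum_{k=0}^{p-2}\frac{A_k}{m^k(k+1)}\pmod{p^3}.$$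
   Context: $\mathbb Z_p$ denotes the set of rational numbers whose denominator is not divisible by $p$; for $u,v\in\mathbb Z_p$, $u\equiv v\pmod{p^r}$ means $(u-v)/p^r\in\mathbb Z_p$. For $a$ rational, $\binom a0=1$ and $\binom ak=\frac{a(a-1)\cdots(a-k+1)}{k!}$ for $k\ge1$. *)

(* Defs.v *)
From mathcomp Require Import all_boot all_order all_algebra.
Set Implicit Arguments. Unset Strict Implicit. Unset Printing Implicit Defensive.
Import Order.TTheory GRing.Theory Num.Theory.
Local Open Scope ring_scope.

Definition in_Zp (p : nat) (x : rat) : bool := ~~ (p %| `|denq x|)%N.

Definition congr_mod (p r : nat) (u v : rat) : Prop :=
  in_Zp p ((u - v) / (p ^ r)%:R).

Definition binq (a : rat) (k : nat) : rat :=
  (\prod_(i < k) (a - i%:R)) / (k`!)%:R.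

Definition Ak (a : rat) (k : nat) : rat :=
  binq a k * binq (-1 - a) k * ('C(k.*2, k))%:R.

(* Main.v *)
Require Import Defs.
From mathcomp Require Import all_boot all_order all_algebra.
From mathcomp Require Import ring lra zify.
Import Order.TTheory GRing.Theory Num.Theory.
Local Open Scope ring_scope.

Lemma ZpP p x : prime p ->
  in_Zp p x <-> exists n d : int, ~~ (p %| `|d|)%N /\ x = n%:~R / d%:~R.
Proof.
move=> pp; split.
  move=> h; exists (numq x), (denq x); split => //.
  by rewrite divq_num_den.
move=> [n [d [hd ->]]].
have d0 : d != 0 by apply: contraNneq hd => ->.
set y := n%:~R / d%:~R.
have e : numq y * d = n * denq y.
  apply: (@intr_inj rat); rewrite !rmorphM /= numqE.
  rewrite /y; field; by rewrite intr_eq0 ?d0 ?denq_neq0.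
have e2 : (`|numq y| * `|d| = `|n| * `|denq y|)%N by rewrite -!abszM e.
apply: contra hd => hD.
apply: dvdn_trans hD _.
rewrite -(@Gauss_dvdr _ `|numq y|); last by rewrite coprime_sym coprime_num_den.
by rewrite e2 dvdn_mull.
Qed.

Lemma Zp_int p (z : int) : prime p -> in_Zp p z%:~R.
Proof.
move=> pp; apply/ZpP => //; exists z, 1; split; last by rewrite divr1.
by rewrite /= Euclid_dvd1.
Qed.

Lemma Zp_nat p n : prime p -> in_Zp p n%:R.
Proof. by move=> pp; have := @Zp_int p n pp. Qed.

Lemma Zp_mul p x y : prime p -> in_Zp p x -> in_Zp p y -> in_Zp p (x * y).
Proof.
move=> pp /(ZpP _ _ pp) [n1 [d1 [h1 ->]]] /(ZpP _ _ pp) [n2 [d2 [h2 ->]]].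
apply/ZpP => //; exists (n1 * n2), (d1 * d2); split.
  by rewrite abszM Euclid_dvdM // negb_or h1 h2.
by rewrite !rmorphM /= mulrACA invfM.
Qed.

Lemma Zp_add p x y : prime p -> in_Zp p x -> in_Zp p y -> in_Zp p (x + y).
Proof.
move=> pp /(ZpP _ _ pp) [n1 [d1 [h1 ->]]] /(ZpP _ _ pp) [n2 [d2 [h2 ->]]].
have d10 : d1 != 0 by apply: contraNneq h1 => ->.
have d20 : d2 != 0 by apply: contraNneq h2 => ->.
apply/ZpP => //; exists (n1 * d2 + n2 * d1), (d1 * d2); split.
  by rewrite abszM Euclid_dvdM // negb_or h1 h2.
rewrite !rmorphD !rmorphM /=; field.
by rewrite !intr_eq0 d10 d20.
Qed.

Lemma Zp_opp p x : prime p -> in_Zp p x -> in_Zp p (- x).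
Proof.
move=> pp h; rewrite -mulN1r; apply: Zp_mul => //.
by have := @Zp_int p (-1) pp.
Qed.

Lemma Zp_sub p x y : prime p -> in_Zp p x -> in_Zp p y -> in_Zp p (x - y).
Proof. by move=> pp hx hy; apply: Zp_add => //; apply: Zp_opp. Qed.

Lemma Zp_exp p x k : prime p -> in_Zp p x -> in_Zp p (x ^+ k).
Proof.
move=> pp hx; elim: k => [|k ih]; first by rewrite expr0; apply: (@Zp_nat p 1).
by rewrite exprS; apply: Zp_mul.
Qed.

Lemma Zp_invn p n : prime p -> ~~ (p %| n)%N -> in_Zp p (n%:R)^-1.
Proof.
move=> pp h; apply/ZpP => //; exists 1, n; split => //.
by rewrite div1r.
Qed.

Lemma Zp_inv p x : prime p -> in_Zp p x -> ~ in_Zp p (x / p%:R) -> in_Zp p x^-1.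
Proof.
move=> pp hx hxp; apply/ZpP => //.
exists (denq x), (numq x); split; last first.
  by rewrite -[in LHS](divq_num_den x) invf_div.
apply/negP => hd; apply: hxp.
have [k hk] : exists k, `|numq x|%N = (k * p)%N by exists (`|numq x| %/ p)%N; rewrite divnK.
apply/ZpP => //.
exists ((-1) ^+ (numq x < 0)%R * k%:Z), (denq x); split => //.
have e : (numq x)%:~R = ((-1) ^+ (numq x < 0)%R * k%:Z)%:~R * (p%:R : rat).
  rewrite {1}[numq x]intEsign hk !rmorphM /= -mulrA; congr (_ * _).
rewrite -[in LHS](divq_num_den x) e.
have p0 : (p%:R : rat) != 0 by rewrite pnatr_eq0 -lt0n prime_gt0.
field; by rewrite p0 intr_eq0 denq_neq0.
Qed.

Lemma Zp_prod p (I : eqType) (r : seq I) (P : pred I) (F : I -> rat) :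
  prime p -> (forall i, P i -> in_Zp p (F i)) -> in_Zp p (\prod_(i <- r | P i) F i).
Proof.
move=> pp h; apply: (big_ind (in_Zp p)) => //; first exact: (@Zp_nat p 1).
by move=> x y; apply: Zp_mul.
Qed.

Lemma Zp_unit_inv p m : prime p -> in_Zp p m -> ~ congr_mod p 1 m 0 -> in_Zp p m^-1.
Proof.
move=> pp hm h; apply: Zp_inv => //; by rewrite /congr_mod subr0 expn1 in h.
Qed.

Lemma Zp_residue p b : prime p -> in_Zp p b ->
  exists i : nat, (i < p)%N /\ in_Zp p ((b - i%:R) / p%:R).
Proof.
move=> pp /(ZpP _ _ pp) [n [d [hd ->]]].
have d0 : d != 0 by apply: contraNneq hd => ->.
have p0 : (p%:Z) != 0 by rewrite -lt0n prime_gt0.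
have cop : coprimez d p by rewrite coprimezE /= coprime_sym prime_coprime.
have [[u v] /= Huv] := coprimezP _ _ cop.
set z := ((n * u) %% p)%Z.
have z0 : 0 <= z by apply: modz_ge0.
have zp : z < p by apply: ltz_pmod; rewrite ltz_nat prime_gt0.
exists `|z|%N; split; first by rewrite -ltz_nat gez0_abs.
have ez : (`|z|%N%:R : rat) = z%:~R by rewrite -[in RHS](gez0_abs z0).
set q := ((n * u) %/ p)%Z.
have Hz : (n * u)%:~R = q%:~R * p%:R + z%:~R :> rat.
  by rewrite [in LHS](divz_eq (n * u) p) rmorphD rmorphM.
have Hu : (u%:~R * d%:~R + v%:~R * p%:R = 1 :> rat).
  by have := congr1 (fun t : int => t%:~R : rat) Huv; rewrite /= rmorphD !rmorphM.
apply/ZpP => //; exists (n * v + q * d), d; split => //.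
rewrite ez.
have -> : (z%:~R : rat) = n%:~R * u%:~R - q%:~R * p%:R.
  by rewrite -intrM Hz; ring.

have pr0 : (p%:R : rat) != 0 by rewrite pnatr_eq0 -lt0n prime_gt0.
have dr0 : (d%:~R : rat) != 0 by rewrite intr_eq0.
rewrite (_ : (n%:~R / d%:~R - (n%:~R * u%:~R - q%:~R * p%:R)) / p%:R =
   (n * v + q * d)%:~R / d%:~R + n%:~R * (1 - (u%:~R * d%:~R + v%:~R * p%:R)) / (d%:~R * p%:R)).
  by rewrite Hu subrr mulr0 mul0r addr0.
rewrite rmorphD !rmorphM /=; field.
by rewrite dr0 pr0.
Qed.

Lemma fact_ndvd p k : prime p -> (k < p)%N -> ~~ (p %| k`!)%N.
Proof.
move=> pp; elim: k => [|k ih] hk; first by rewrite fact0 Euclid_dvd1.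
rewrite factS Euclid_dvdM // negb_or ih ?andbT; last exact: ltnW.
apply/negP => /dvdn_leq; rewrite ltn0Sn => /(_ isT); rewrite leqNgt hk.
by [].
Qed.

Lemma bin_dvd p : prime p -> (2 < p)%N -> (p %| 'C(p.-1.*2, p.-1))%N.
Proof.
move=> pp p2.
have h := bin_fact (leq_addr p.-1 p.-1).
rewrite addnK in h; rewrite -addnn.
have hp : (p %| (p.-1 + p.-1)`!)%N by apply: dvdn_fact; lia.
rewrite -h Euclid_dvdM // in hp.
case/orP: hp => // ; rewrite Euclid_dvdM // => /orP [] h'; exfalso;
  by move: h'; apply/negP; apply: fact_ndvd => //; rewrite prednK ?prime_gt0.
Qed.

Lemma binq_Zp p b : prime p -> in_Zp p b -> in_Zp p (binq b p).
Proof.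
move=> pp hb; have [r [hr hres]] := Zp_residue _ _ pp hb.
rewrite /binq (bigD1 (Ordinal hr)) //=.
have p0 := prime_gt0 pp.
have fp : (p`!%:R : rat) = p%:R * (p.-1)`!%:R.
  by rewrite -natrM; congr _%:R; case: (p) p0.
rewrite fp.
have pr0 : (p%:R : rat) != 0 by rewrite pnatr_eq0 -lt0n.
have fr0 : ((p.-1)`!%:R : rat) != 0 by rewrite pnatr_eq0 -lt0n fact_gt0.
set P := \prod_(_ | _) _.
rewrite (_ : _ / _ = (b - r%:R) / p%:R * P * ((p.-1)`!%:R)^-1); last first.
  by field; rewrite pr0 fr0.
apply: Zp_mul => //; first apply: Zp_mul => //.
  apply: Zp_prod => // i _; apply: Zp_sub => //; exact: Zp_nat.
apply: Zp_invn => //; apply: fact_ndvd => //; rewrite prednK //.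
Qed.

Lemma binq_pm1 p b : prime p -> in_Zp p b -> ~ in_Zp p ((b + 1) / p%:R) ->
  in_Zp p (binq b p.-1 / p%:R).
Proof.
move=> pp hb hb1; have [r [hr hres]] := Zp_residue _ _ pp hb.
have p0 := prime_gt0 pp.
have hr' : (r < p.-1)%N.
  rewrite ltn_neqAle -ltnS prednK // hr andbT; apply/eqP => er.
  apply: hb1; rewrite (_ : b + 1 = (b - r%:R) + p%:R).
    have pr0 : (p%:R : rat) != 0 by rewrite pnatr_eq0 -lt0n.
    rewrite mulrDl divff //; apply: Zp_add => //; exact: (@Zp_nat p 1).
  by rewrite er -[in p%:R](prednK p0) -addn1 natrD; ring.
rewrite /binq (bigD1 (Ordinal hr')) //=.
have pr0 : (p%:R : rat) != 0 by rewrite pnatr_eq0 -lt0n.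
have fr0 : ((p.-1)`!%:R : rat) != 0 by rewrite pnatr_eq0 -lt0n fact_gt0.
set P := \prod_(_ | _) _.
rewrite (_ : _ / _ = (b - r%:R) / p%:R * P * ((p.-1)`!%:R)^-1); last first.
  by field; rewrite pr0 fr0.
apply: Zp_mul => //; first apply: Zp_mul => //.
  apply: Zp_prod => // i _; apply: Zp_sub => //; exact: Zp_nat.
apply: Zp_invn => //; apply: fact_ndvd => //; rewrite prednK //.
Qed.

Lemma Ak_p p a : prime p -> in_Zp p a -> in_Zp p (Ak a p).
Proof.
move=> pp ha; rewrite /Ak; apply: Zp_mul => //; last exact: Zp_nat.
apply: Zp_mul => //; apply: binq_Zp => //.
apply: Zp_sub => //; exact: (@Zp_int p (-1)).
Qed.

Lemma Ak_pm1 p a : prime p -> (2 < p)%N -> in_Zp p a ->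
  ~ congr_mod p 1 a 0 -> ~ congr_mod p 1 a (-1) ->
  in_Zp p (Ak a p.-1 / (p ^ 3)%:R).
Proof.
move=> pp p2 ha h0 h1.
rewrite /congr_mod expn1 subr0 in h0; rewrite /congr_mod expn1 opprK in h1.
have pr0 : (p%:R : rat) != 0 by rewrite pnatr_eq0 -lt0n prime_gt0.
have [c hc] : exists c, 'C(p.-1.*2, p.-1) = (c * p)%N.
  by exists ('C(p.-1.*2, p.-1) %/ p)%N; rewrite divnK // bin_dvd.
rewrite /Ak hc (_ : _ / _ = (binq a p.-1 / p%:R) * (binq (-1 - a) p.-1 / p%:R) * c%:R);
  last by rewrite natrM natrX; field.
apply: Zp_mul => //; last exact: Zp_nat.
apply: Zp_mul => //; first exact: binq_pm1.
apply: binq_pm1 => //; first by apply: Zp_sub => //; exact: (@Zp_int p (-1)).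
rewrite (_ : -1 - a + 1 = - a); last by ring.
move=> h; apply: h0; rewrite -[a]opprK mulNr; exact: Zp_opp.
Qed.

Lemma binqS b k : binq b k.+1 = binq b k * (b - k%:R) / k.+1%:R.
Proof.
rewrite /binq big_ord_recr /= factS natrM.
have h1 : (k.+1%:R : rat) != 0 by rewrite pnatr_eq0.
have h2 : (k`!%:R : rat) != 0 by rewrite pnatr_eq0 -lt0n fact_gt0.
field; by rewrite h2 addrC natr1 h1.
Qed.

Lemma binC_rec k : ('C(k.+1.*2, k.+1) * (k.+1 * k.+1) = (k.+1.*2 * (k.*2.+1)) * 'C(k.*2, k))%N.
Proof.
have E1 := mul_bin_diag (k.+1.*2) k.
have E2 := mul_bin_diag (k.*2.+1) k.
have E3 : 'C(k.*2.+1, k.+1) = 'C(k.*2.+1, k).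
  have h : (k <= k.*2.+1)%N by lia.
  by rewrite -(bin_sub h) (_ : (k.*2.+1 - k = k.+1)%N) //; lia.
rewrite doubleS /= in E1.
rewrite /= E3 in E2.
rewrite doubleS; nia.
Qed.

Lemma nz1 k : (1 + k%:R : rat) != 0.
Proof. by rewrite addrC natr1 pnatr_eq0. Qed.

Lemma Ak_rec a k : (k.+1%:R : rat) ^+ 3 * Ak a k.+1 =
  2 * (2 * k%:R + 1) * (k%:R ^+ 2 + k%:R - a * (a + 1)) * Ak a k.
Proof.
rewrite /Ak !binqS.
have h1 : (k.+1%:R : rat) != 0 by rewrite pnatr_eq0.
have e0 : ((k.+1.*2 * k.*2.+1 * 'C(k.*2, k))%:R : rat) =
   2 * k.+1%:R * (2 * k%:R + 1) * ('C(k.*2, k))%:R.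
  by rewrite !natrM -!muln2 -addn1 natrD !natrM; ring.
have e : ('C(k.+1.*2, k.+1))%:R = 2 * k.+1%:R * (2 * k%:R + 1) * ('C(k.*2, k))%:R / (k.+1%:R ^+ 2 : rat).
  rewrite -e0 -binC_rec !natrM; field.
  by rewrite nz1.
rewrite e -[k.+1]addn1 natrD.
field.
by rewrite natr1.
Qed.

Lemma sum_id2 (a m : rat) (N : nat) : m != 0 ->
  let S (j : nat) := \sum_(0 <= k < N) (k%:R ^+ j * Ak a k / m ^+ k) in
  m * (S 3%N + N%:R ^+ 3 * Ak a N / m ^+ N) =
  4 * S 3%N + 6 * S 2%N + (2 - 4 * (a * (a + 1))) * S 1%N - 2 * (a * (a + 1)) * S 0%N.
Proof.
move=> m0 S.
set F := fun k : nat => k%:R ^+ 3 * Ak a k / m ^+ k.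
have H : \sum_(0 <= k < N) F k.+1 = S 3%N + F N.
  have F0 : F 0%N = 0 by rewrite /F expr0n /= !mul0r.
  by rewrite -[LHS]add0r -{1}F0 -big_nat_recl // big_nat_recr.
rewrite -H /S mulr_sumr !mulr_sumr -!big_split -sumrB /=.
apply: eq_bigr => k _; rewrite /F.
rewrite Ak_rec (exprS m).
field; by rewrite expf_neq0 ?m0.
Qed.

Lemma Ak_rec' a k : Ak a k.+1 =
  2 * (2 * k%:R + 1) * (k%:R ^+ 2 + k%:R - a * (a + 1)) * Ak a k / (k.+1%:R ^+ 3).
Proof.
rewrite -Ak_rec; field; by rewrite ?nz1 ?natr1 ?pnatr_eq0.
Qed.

Lemma sum_id1 (a m : rat) (N : nat) : m != 0 ->
  let S (j : nat) := \sum_(0 <= k < N.+1) (k%:R ^+ j * Ak a k / m ^+ k) in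
  let T := \sum_(0 <= k < N) (Ak a k / (m ^+ k * (k.+1)%:R)) in
  m * S 2%N = 4 * S 2%N + 2 * S 1%N - 4 * (a * (a + 1)) * S 0%N
     - 2 * ((2 * N%:R ^+ 2 + N%:R - 2 * (a * (a + 1))) * Ak a N / m ^+ N)
     + 2 * (a * (a + 1)) * T.
Proof.
move=> m0 S T.
pose h := fun k : nat => (2 * k%:R ^+ 2 + k%:R - 2 * (a * (a + 1))) * Ak a k / m ^+ k.
have HS : 4 * S 2%N + 2 * S 1%N - 4 * (a * (a + 1)) * S 0%N =
   2 * (\sum_(0 <= k < N) h k + h N).
  rewrite -big_nat_recr //= /S !mulr_sumr -!big_split -sumrB /=.
  by apply: eq_bigr => k _; rewrite /h; ring.
set F := fun k : nat => k%:R ^+ 2 * Ak a k / m ^+ k.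
have HF : S 2%N = \sum_(0 <= k < N) F k.+1.
  have F0 : F 0%N = 0 by rewrite /F expr0n /= !mul0r.
  by rewrite -[RHS]add0r -{1}F0 -big_nat_recl.
rewrite HS HF.
rewrite (_ : 2 * (\sum_(0 <= k < N) h k + h N) - 2 * h N = 2 * \sum_(0 <= k < N) h k); last by ring.
rewrite /T !mulr_sumr -big_split /=.
apply: eq_bigr => k _; rewrite /F /h Ak_rec' (exprS m).
field; by rewrite nz1 expf_neq0 ?m0.
Qed.

Ltac zp pp := repeat match goal with
  | H : is_true (in_Zp _ ?x) |- is_true (in_Zp _ ?x) => exact: H
  | |- is_true (in_Zp _ (_ + _)) => apply: (Zp_add _ _ _ pp)
  | |- is_true (in_Zp _ (_ * _)) => apply: (Zp_mul _ _ _ pp)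
  | |- is_true (in_Zp _ (- _)) => apply: (Zp_opp _ _ pp)
  | |- is_true (in_Zp _ (_ ^+ _)) => apply: (Zp_exp _ _ _ pp)
  | |- is_true (in_Zp _ (_ %:R)) => exact: (Zp_nat _ _ pp)
  | |- is_true (in_Zp _ 1) => exact: (Zp_nat _ 1 pp)
  | |- is_true (in_Zp _ 0) => exact: (Zp_nat _ 0 pp)
  | |- is_true (in_Zp _ (_ %:~R)) => exact: (Zp_int _ _ pp)
  end.

Theorem theorem3p1 (p : nat) (a m : rat) :
  prime p -> odd p ->
  in_Zp p a -> in_Zp p m ->
  ~ congr_mod p 1 a 0 -> ~ congr_mod p 1 a (-1) -> ~ congr_mod p 1 m 0 ->
  let S (j : nat) := \sum_(0 <= k < p) (k%:R ^+ j * Ak a k / m ^+ k) in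
  let T := \sum_(0 <= k < p.-1) (Ak a k / (m ^+ k * (k.+1)%:R)) in
  [/\ congr_mod p 3 ((m - 4) / 2 * S 2%N)
        (S 1%N - 2 * a * (a + 1) * S 0%N + a * (a + 1) * T),
      congr_mod p 3 ((m - 4) / 2 * S 3%N)
        (3 * S 2%N - (2 * a * (a + 1) - 1) * S 1%N - a * (a + 1) * S 0%N)
    & ~ congr_mod p 1 m 4 ->
      congr_mod p 3 (S 3%N)
        (((2 - 4 * a * (a + 1)) * (m - 4) + 12) / (m - 4) ^+ 2 * S 1%N
         - 2 * a * (a + 1) * (m + 8) / (m - 4) ^+ 2 * S 0%N
         + 12 * a * (a + 1) / (m - 4) ^+ 2 * T)].
Proof.
move=> pp podd ha hm h0 h1 hm0 S T.
have p2 : (2 < p)%N by move: (prime_gt1 pp) podd; case: (p) => [|[|[|]]].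
have p0 : (0 < p)%N by apply: prime_gt0.
have m0 : m != 0.
  apply/eqP => e; apply: hm0; rewrite /congr_mod e subrr mul0r; exact: (@Zp_nat p 0).
have mi : in_Zp p m^-1 by apply: Zp_unit_inv.
have i2 : in_Zp p (2%:R)^-1.
  apply: Zp_invn => //; apply/negP => /dvdn_leq; lia.
have pr0 : ((p ^ 3)%:R : rat) != 0 by rewrite pnatr_eq0 expn_eq0; apply/negP => /andP [/eqP h _]; move: p0; rewrite h.
have E1 := sum_id1 a m p.-1 m0; rewrite /= prednK // in E1.
have E2 := sum_id2 a m p m0; rewrite /= in E2.
have C1 : congr_mod p 3 ((m - 4) / 2 * S 2%N)
        (S 1%N - 2 * a * (a + 1) * S 0%N + a * (a + 1) * T).
  rewrite /congr_mod.
  have -> : (m - 4) / 2 * S 2%N - (S 1%N - 2 * a * (a + 1) * S 0%N + a * (a + 1) * T) =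
     - ((2 * p.-1%:R ^+ 2 + p.-1%:R - 2 * (a * (a + 1))) * Ak a p.-1 / m ^+ p.-1).
    rewrite /S /T; lra.
  rewrite (_ : _ / _ = - (2 * p.-1%:R ^+ 2 + p.-1%:R - 2 * (a * (a + 1))) *
     (Ak a p.-1 / (p ^ 3)%:R) * (m^-1) ^+ p.-1); last first.
    rewrite exprVn; field; by rewrite expf_neq0 // pnatr_eq0 -lt0n.
  have hA := Ak_pm1 _ _ pp p2 ha h0 h1.
  zp pp.
have C2 : congr_mod p 3 ((m - 4) / 2 * S 3%N)
        (3 * S 2%N - (2 * a * (a + 1) - 1) * S 1%N - a * (a + 1) * S 0%N).
  rewrite /congr_mod.
  have -> : (m - 4) / 2 * S 3%N -
        (3 * S 2%N - (2 * a * (a + 1) - 1) * S 1%N - a * (a + 1) * S 0%N) =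
     - (m * (p%:R ^+ 3 * Ak a p / m ^+ p)) / 2.
    rewrite /S; lra.
  rewrite (_ : _ / _ = - 2^-1 * m * Ak a p * (m^-1) ^+ p); last first.
    rewrite exprVn natrX; field; by rewrite expf_neq0 // pnatr_eq0 -lt0n.
  have hAp := Ak_p _ _ pp ha.
  zp pp.
split; [exact: C1 | exact: C2 | move=> hm4].
have m4 : m - 4 != 0.
  apply/eqP => e; apply: hm4; rewrite /congr_mod e mul0r; exact: (@Zp_nat p 0).
have mi4 : in_Zp p (m - 4)^-1.
  apply: Zp_unit_inv => //; first by zp pp.
  by rewrite /congr_mod subr0.
move: C1 C2; rewrite /congr_mod => C1 C2.
set D1 := (_ - _) / _ in C1.
set D2 := (_ - _) / _ in C2.
rewrite (_ : _ / _ = 2 * (m - 4)^-1 * D2 + 12 * ((m - 4)^-1) ^+ 2 * D1).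
  zp pp.
rewrite /D1 /D2; field; by rewrite m4 pnatr_eq0 -lt0n p0.
Qed.
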